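(* Let $d>0$ be square-free and $A=\begin{pmatrix}a&B\\ \bar B&c\end{pmatrix}$ with $a,c\in\mathbb{Z}$, $B\in\mathcal{O}_d$, $D=|B|^2-ac>0$. If $A$ corresponds to an embedded totally geodesic surface in $\Omega_d$, then $$4D\le \min_{x,y\in\mathcal{O}_d:\ Q_A(x,y)\neq0} Q_A(x,y)^2,$$ where $Q_A(x,y)=\begin{pmatrix}x&y\end{pmatrix}A\begin{pmatrix}\bar x\\ \bar y\end{pmatrix}$.
   Context: $\mathcal{O}_d$ is the ring of integers of $\mathbb{Q}(\sqrt{-d})$, $\Gamma_d=\mathrm{PSL}(2,\mathcal{O}_d)$, $\Omega_d=\mathbb{H}^3/\Gamma_d$. The surface corresponding to $A$ is the image in $\Omega_d$ of the hyperbolic plane $H$ bounded by the circle/line $\{z: Q_A(z,1)=0\}$; it is embedded if for all $\gamma\in\Gamma_d$, $\gamma H=H$ or $\gamma H\cap H=\emptyset$. *)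

(* Defs.v *)
From HB Require Import structures.
From mathcomp Require Import all_boot all_order all_algebra.
From mathcomp Require Import complex.
From mathcomp Require Import Rstruct.

Set Implicit Arguments.
Unset Strict Implicit.
Unset Printing Implicit Defensive.

Import Order.TTheory GRing.Theory Num.Theory.
Local Open Scope ring_scope.
Local Open Scope complex_scope.

Definition C : Type := (Rdefinitions.R)[i].

Definition squarefree (d : nat) : Prop :=
  (0 < d)%N /\ forall p : nat, prime p -> ~~ (p * p %| d)%N.

(** The standard integral generator omega_d of O_d, the ring of integers of
    Q(sqrt(-d)) (d square-free):  O_d = Z[omega_d] with
    omega_d = (1 + sqrt(-d))/2 if -d = 1 mod 4 (i.e. d = 3 mod 4),
    omega_d = sqrt(-d) otherwise. *)
Definition sqrt_minus (d : nat) : C :=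
  'i * (Num.sqrt (d%:R : Rdefinitions.R))%:C.

Definition omega (d : nat) : C :=
  if (d %% 4 == 3)%N then (1 + sqrt_minus d) / 2 else sqrt_minus d.

Definition inO (d : nat) (z : C) : Prop :=
  exists u v : int, z = u%:~R + v%:~R * omega d.

Definition QA (a : int) (B : C) (c : int) (x y : C) : C :=
  a%:~R * x * x^* + B * x * y^* + B^* * y * x^* + c%:~R * y * y^*.

(** Upper half-space model of H^3: points (z, t) with z : C and t a positive
    real number (encoded as an element of C with 0 < t, i.e. t real > 0). *)
Definition H3 (p : C * C) : Prop := 0 < p.2.

(** Action of g = [[al, be], [ga, de]] in SL(2, C) on H^3 (Poincare extension):
    (z, t) |-> ( ((al z + be) conj(ga z + de) + al conj(ga) t^2) / N , t / N )
    with N = |ga z + de|^2 + |ga|^2 t^2. *)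
Definition mob_act (al be ga de : C) (p : C * C) : C * C :=
  let z := p.1 in let t := p.2 in
  let N := (ga * z + de) * (ga * z + de)^* + ga * ga^* * t ^+ 2 in
  (((al * z + be) * (ga * z + de)^* + al * ga^* * t ^+ 2) / N, t / N).

(** The hyperbolic plane H_A in H^3 bounded by the circle/line
    {z : Q_A(z,1) = 0} = {z : a|z|^2 + B z + conj(B) conj(z) + c = 0}:
    the hemisphere / vertical half-plane a(|z|^2 + t^2) + B z + conj(B) conj(z) + c = 0. *)
Definition plane (a : int) (B : C) (c : int) (p : C * C) : Prop :=
  H3 p /\
  a%:~R * (p.1 * p.1^* + p.2 ^+ 2) + B * p.1 + B^* * p.1^* + c%:~R = 0.

(** Elements of Gamma_d = PSL(2, O_d), represented by matrices of SL(2, O_d)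
    (g and -g act identically on H^3). *)
Definition in_SL2O (d : nat) (al be ga de : C) : Prop :=
  [/\ inO d al, inO d be, inO d ga, inO d de & al * de - be * ga = 1].

Definition embedded_surface (d : nat) (a : int) (B : C) (c : int) : Prop :=
  forall al be ga de : C, in_SL2O d al be ga de ->
    let gH := fun q : C * C =>
      exists p, plane a B c p /\ q = mob_act al be ga de p in
    (forall q, gH q <-> plane a B c q) \/
    (forall q, ~ (gH q /\ plane a B c q)).

(* Main.v *)
Require Import Defs.
From mathcomp Require Import all_boot all_order all_algebra.
From mathcomp Require Import complex.
From mathcomp Require Import Rstruct.
From mathcomp Require Import ring.

Import Order.TTheory GRing.Theory Num.Theory.
Local Open Scope ring_scope.
Local Open Scope complex_scope.

Section Gen.
Variables (R : fieldType) (cj : R -> R).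
Hypotheses (cjD : forall x y, cj (x + y) = cj x + cj y)
  (cjM : forall x y, cj (x * y) = cj x * cj y)
  (cjN : forall x, cj (- x) = - cj x)
  (cjK : forall x, cj (cj x) = x)
  (cj1 : cj 1 = 1) (cj0 : cj 0 = 0)
  (cjV : forall x, cj (x^-1) = (cj x)^-1)
  (cjX : forall x n, cj (x ^+ n) = cj x ^+ n).

Definition EfG (a B c z t : R) : R := a * (z * cj z + t ^+ 2) + B * z + cj B * cj z + c.
Definition tA (a B c al be ga de : R) : R := a*al*cj al + B*al*cj ga + cj B*ga*cj al + c*ga*cj ga.
Definition tB (a B c al be ga de : R) : R := a*al*cj be + B*al*cj de + cj B*ga*cj be + c*ga*cj de.
Definition tC (a B c al be ga de : R) : R := tA a B c be al de ga.
Definition NG (ga de z t : R) : R := (ga * z + de) * cj (ga * z + de) + ga * cj ga * t ^+ 2.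
Definition mob1 (al be ga de z t : R) : R :=
  ((al * z + be) * cj (ga * z + de) + al * cj ga * t ^+ 2) / NG ga de z t.
Definition mob2 (al be ga de z t : R) : R := t / NG ga de z t.

Ltac pc := rewrite ?(cjD, cjM, cjN, cjK, cj1, cj0, cjX).

Lemma tA_real a B c al be ga de : cj a = a -> cj c = c -> cj (tA a B c al be ga de) = tA a B c al be ga de.
Proof. move=> ha hc; rewrite /tA; pc; rewrite ha hc; ring. Qed.

Lemma NG_real ga de z t : cj t = t -> cj (NG ga de z t) = NG ga de z t.
Proof. move=> ht; rewrite /NG; pc; rewrite ht; ring. Qed.

Lemma mob_identity a B c al be ga de z t :
  cj a = a -> cj c = c -> cj t = t -> al * de - be * ga = 1 -> NG ga de z t != 0 ->
  EfG a B c (mob1 al be ga de z t) (mob2 al be ga de z t) * NG ga de z t =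
  EfG (tA a B c al be ga de) (tB a B c al be ga de) (tC a B c al be ga de) z t.
Proof.
move=> ha hc ht hdet hN.
set N := NG ga de z t.
set num := (al * z + be) * cj (ga * z + de) + al * cj ga * t ^+ 2.
have cN : cj N = N by exact: NG_real.
have K : num * cj num + t ^+ 2 = N * ((al*z+be) * cj (al*z+be) + al * cj al * t^+2).
  transitivity (num * cj num + t ^+ 2 * ((al * de - be * ga) * cj (al * de - be * ga))).
    by rewrite hdet cj1 !mulr1.
  rewrite /num /N /NG; pc; rewrite ht; ring.
rewrite /EfG /mob1 /mob2 -/N -/num cjM cjV cN.
have -> : a * (num / N * (cj num / N) + (t / N) ^+ 2) + B * (num / N) + cj B * (cj num / N) + c
   = (a * (num * cj num + t^+2) + N * (B * num + cj B * cj num) + c * N ^+ 2) / N ^+ 2.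
  by field.
rewrite K.
have -> : (a * (N * ((al * z + be) * cj (al * z + be) + al * cj al * t ^+ 2)) +
    N * (B * num + cj B * cj num) + c * N ^+ 2) / N ^+ 2 * N
    = a * ((al * z + be) * cj (al * z + be) + al * cj al * t ^+ 2) + (B * num + cj B * cj num) + c * N.
  by field.
rewrite /num /N /NG /tC /tA /tB; pc; rewrite ha hc ht; ring.
Qed.


Lemma comp_A a B c g1 g2 g3 g4 h1 h2 h3 h4 : cj a = a -> cj c = c ->
  tA (tA a B c g1 g2 g3 g4) (tB a B c g1 g2 g3 g4) (tC a B c g1 g2 g3 g4) h1 h2 h3 h4
  = tA a B c (g1*h1+g2*h3) (g1*h2+g2*h4) (g3*h1+g4*h3) (g3*h2+g4*h4).
Proof. move=> ha hc; rewrite /tC /tA /tB; pc; rewrite ha hc; ring. Qed.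
Lemma comp_B a B c g1 g2 g3 g4 h1 h2 h3 h4 : cj a = a -> cj c = c ->
  tB (tA a B c g1 g2 g3 g4) (tB a B c g1 g2 g3 g4) (tC a B c g1 g2 g3 g4) h1 h2 h3 h4
  = tB a B c (g1*h1+g2*h3) (g1*h2+g2*h4) (g3*h1+g4*h3) (g3*h2+g4*h4).
Proof. move=> ha hc; rewrite /tC /tA /tB; pc; rewrite ha hc; ring. Qed.
Lemma comp_C a B c g1 g2 g3 g4 h1 h2 h3 h4 : cj a = a -> cj c = c ->
  tC (tA a B c g1 g2 g3 g4) (tB a B c g1 g2 g3 g4) (tC a B c g1 g2 g3 g4) h1 h2 h3 h4
  = tC a B c (g1*h1+g2*h3) (g1*h2+g2*h4) (g3*h1+g4*h3) (g3*h2+g4*h4).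
Proof. move=> ha hc; rewrite /tC /tA /tB; pc; rewrite ha hc; ring. Qed.

Lemma shiftU a B c z t : cj a = a ->
  EfG (tA a B c 1 1 0 1) (tB a B c 1 1 0 1) (tC a B c 1 1 0 1) z t = EfG a B c (z + 1) t.
Proof. move=> ha; rewrite /EfG /tC /tA /tB; pc; rewrite ha; ring. Qed.

Lemma center n b k s t : cj n = n -> cj k = k -> n != 0 ->
  EfG n b k (- cj b / n + s) t = n * (s * cj s + t ^+ 2) - (b * cj b - n * k) / n.
Proof. move=> hn hk n0; rewrite /EfG; pc; rewrite cjV hn; by field. Qed.

Lemma det_tr a B c al be ga de : cj a = a -> cj c = c ->
  tB a B c al be ga de * cj (tB a B c al be ga de) - tA a B c al be ga de * tC a B c al be ga de
  = ((al * de - be * ga) * cj (al * de - be * ga)) * (B * cj B - a * c).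
Proof. move=> ha hc; rewrite /tC /tA /tB; pc; rewrite ha hc; ring. Qed.

End Gen.

Arguments EfG {R}. Arguments tA {R}. Arguments tB {R}. Arguments tC {R}.
Arguments NG {R}. Arguments mob1 {R}. Arguments mob2 {R}.

Definition cjC (x : C) : C := x^*.
Lemma cjCD x y : cjC (x + y) = cjC x + cjC y. Proof. exact: rmorphD. Qed.
Lemma cjCM x y : cjC (x * y) = cjC x * cjC y. Proof. exact: rmorphM. Qed.
Lemma cjCN x : cjC (- x) = - cjC x. Proof. exact: rmorphN. Qed.
Lemma cjCK x : cjC (cjC x) = x. Proof. exact: conjCK. Qed.
Lemma cjC1 : cjC 1 = 1. Proof. exact: rmorph1. Qed.
Lemma cjC0 : cjC 0 = 0. Proof. exact: rmorph0. Qed.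
Lemma cjCV x : cjC (x^-1) = (cjC x)^-1. Proof. exact: fmorphV. Qed.
Lemma cjCX x n : cjC (x ^+ n) = cjC x ^+ n. Proof. exact: rmorphXn. Qed.
Lemma cjCi (k : int) : cjC k%:~R = k%:~R. Proof. exact: rmorph_int. Qed.

Ltac cjt := first [exact: cjCD | exact: cjCM | exact: cjCN | exact: cjCK | exact: cjC1
  | exact: cjC0 | exact: cjCV | exact: cjCX].

Lemma plane_iff (a c : int) (B : C) (p : C * C) :
  plane a B c p <-> (0 < p.2 /\ EfG cjC a%:~R B c%:~R p.1 p.2 = 0).
Proof. by []. Qed.

Lemma mob_eq (al be ga de : C) (p : C * C) : mob_act al be ga de p =
  (mob1 cjC al be ga de p.1 p.2, mob2 cjC al be ga de p.1 p.2).
Proof. by []. Qed.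

Lemma pos_conj (x : C) : 0 < x -> cjC x = x.
Proof. by move/gtr0_real/conj_Creal. Qed.

Lemma NG_pos (al be ga de z t : C) : 0 < t -> al * de - be * ga = 1 -> 0 < NG cjC ga de z t.
Proof.
move=> t0 hdet; rewrite /NG /cjC.
case: (ga =P 0) => [g0|/eqP g0].
  rewrite g0 !mul0r add0r addr0 mul_conjC_gt0; apply/eqP => d0.
  by move: hdet; rewrite d0 g0 !mulr0 subr0 => /eqP; rewrite eq_sym oner_eq0.
apply: ltr_wpDl; first exact: mul_conjC_ge0.
by apply: mulr_gt0; [rewrite mul_conjC_gt0 | exact: exprn_gt0].
Qed.
Lemma sqrt_minus_sq d : sqrt_minus d ^+ 2 = - (d%:R : C).
Proof.
rewrite /sqrt_minus exprMn sqrCi -rmorphXn /= sqr_sqrtr ?ler0n // rmorph_nat mulN1r. reflexivity.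
Qed.

Lemma omega_sq d : exists e1 e2 : int, omega d ^+ 2 = e1%:~R + e2%:~R * omega d.
Proof.
rewrite /omega; case: ifP => [/eqP h3|_]; last first.
  by exists (- (d%:Z)), 0; rewrite sqrt_minus_sq mul0r addr0 rmorphN /=.
exists (- ((d %/ 4)%:Z + 1)), 1.
have hd : (d%:R : C) = 4 * (d %/ 4)%:R + 3.
  by rewrite {1}(divn_eq d 4) h3 natrD natrM mulrC.
have -> : ((1 + sqrt_minus d) / 2) ^+ 2 = (1 + 2 * sqrt_minus d + sqrt_minus d ^+ 2) / 4.
  by field.
rewrite sqrt_minus_sq hd rmorphN rmorphD /= mul1r.
have -> : ((d %/ 4)%:Z)%:~R = ((d %/ 4)%:R : C) by [].
by field.
Qed.

Lemma inO_mul d x y : inO d x -> inO d y -> inO d (x * y).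
Proof.
case: (omega_sq d) => e1 [e2 he].
move=> [u1 [v1 ->]] [u2 [v2 ->]].
exists (u1 * u2 + v1 * v2 * e1), (u1 * v2 + u2 * v1 + v1 * v2 * e2).
transitivity (u1%:~R * u2%:~R + (u1%:~R * v2%:~R + u2%:~R * v1%:~R) * omega d + v1%:~R * v2%:~R * omega d ^+ 2 : C).
  ring.
rewrite he !rmorphD !rmorphM /=; ring.
Qed.

Lemma inO_add d x y : inO d x -> inO d y -> inO d (x + y).
Proof.
move=> [u1 [v1 ->]] [u2 [v2 ->]]; exists (u1 + u2), (v1 + v2).
rewrite !rmorphD /=; ring.
Qed.

Lemma inO_opp d x : inO d x -> inO d (- x).
Proof. move=> [u1 [v1 ->]]; exists (- u1), (- v1); rewrite !rmorphN /=; ring. Qed.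

Lemma inO_1 d : inO d 1.
Proof. by exists 1, 0; rewrite mul0r addr0. Qed.

Lemma TR (a B c al be ga de : C) (p : C * C) : cjC a = a -> cjC c = c -> 0 < p.2 ->
  al * de - be * ga = 1 ->
  EfG cjC a B c (mob_act al be ga de p).1 (mob_act al be ga de p).2 * NG cjC ga de p.1 p.2 =
  EfG cjC (tA cjC a B c al be ga de) (tB cjC a B c al be ga de) (tC cjC a B c al be ga de) p.1 p.2.
Proof.
move=> ha hc t0 hdet; rewrite mob_eq /=.
apply: mob_identity; try cjt; try done.
  exact: pos_conj.
by rewrite gt_eqF // (NG_pos _ _ _ _ _ _ t0 hdet).
Qed.

Lemma H3_mob (al be ga de : C) (p : C * C) : 0 < p.2 -> al * de - be * ga = 1 ->
  0 < (mob_act al be ga de p).2.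
Proof.
move=> t0 hdet; rewrite mob_eq /mob2 /=.
exact: divr_gt0 t0 (NG_pos _ _ _ _ _ _ t0 hdet).
Qed.

Lemma cjCn (k : nat) : cjC k%:R = k%:R. Proof. exact: rmorph_nat. Qed.

Theorem corollary3p6 (d : nat) (a c : int) (B : C) :
  squarefree d ->
  inO d B ->
  0 < B * B^* - (a * c)%:~R ->
  embedded_surface d a B c ->
  forall x y : C, inO d x -> inO d y -> QA a B c x y != 0 ->
    4 * (B * B^* - (a * c)%:~R) <= QA a B c x y ^+ 2.
Proof.
move=> _ hB hD hemb x y hx hy hn.
set D := B * B^* - (a * c)%:~R.
set n := QA a B c x y.
have ha : cjC a%:~R = a%:~R := cjCi a.
have hc : cjC c%:~R = c%:~R := cjCi c.
have nE : forall u1 u2, n = tA cjC a%:~R B c%:~R x u1 y u2 by [].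
have nr : cjC n = n by rewrite (nE 0 0); apply: tA_real; try cjt; try done.
have n2 : 0 < n ^+ 2 by rewrite expr2 -{2}nr /cjC mul_conjC_gt0.
apply: contraT => hle.
have D0 : 0 < D := hD.
have lt : n ^+ 2 < 4 * D.
  rewrite real_ltNge ?hle //; first exact: gtr0_real.
  by apply: gtr0_real; apply: mulr_gt0 => //; rewrite ltr0n.
set w := D / n ^+ 2 - 4^-1.
have w0 : 0 < w.
  have -> : w = (4 * D - n ^+ 2) / (4 * n ^+ 2) by rewrite /w; field.
  by rewrite divr_gt0 // ?subr_gt0 // mulr_gt0 // ltr0n.
set t1 := sqrtC w.
set r := sqrtC (D / n ^+ 2).
have t10 : 0 < t1 by rewrite sqrtC_gt0.
have r0 : 0 < r by rewrite sqrtC_gt0 divr_gt0.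
have [u1 [u2 hu]] : exists u1 u2 : C, x * u2 - u1 * y = 1.
  case: (x =P 0) => [x0|/eqP x0]; last by exists 0, x^-1; rewrite mulfV // mul0r subr0.
  case: (y =P 0) => [y0|/eqP y0].
    by move: hn; rewrite /n /QA x0 y0 !mulr0 !mul0r !addr0 eqxx.
  by exists (- y^-1), 0; rewrite mulr0 sub0r mulNr opprK mulVf.
set bh := tB cjC a%:~R B c%:~R x u1 y u2.
set kh := tC cjC a%:~R B c%:~R x u1 y u2.
have kr : cjC kh = kh by apply: tA_real; try cjt; try done.
have Dh : bh * cjC bh - n * kh = D.
  rewrite (nE u1 u2) /kh /bh det_tr; try cjt; try done.
  by rewrite hu cjC1 !mul1r /D /cjC intrM.
have n0 : n != 0 := hn.
have hN : forall p0 : C * C, 0 < p0.2 -> 0 < NG cjC y u2 p0.1 p0.2.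
  by move=> p0 p00; apply: (NG_pos x u1 y u2).
have E1 : forall p0 : C * C, 0 < p0.2 ->
   EfG cjC a%:~R B c%:~R (mob_act x u1 y u2 p0).1 (mob_act x u1 y u2 p0).2
     * NG cjC y u2 p0.1 p0.2 = EfG cjC n bh kh p0.1 p0.2.
  by move=> p0 p00; apply: TR.
have hT : (1 - x * y) * (1 + x * y) - x ^+ 2 * - (y ^+ 2) = 1 by ring.
have E2 : forall p0 : C * C, 0 < p0.2 ->
   EfG cjC a%:~R B c%:~R
     (mob_act (1 - x * y) (x ^+ 2) (- (y ^+ 2)) (1 + x * y) (mob_act x u1 y u2 p0)).1
     (mob_act (1 - x * y) (x ^+ 2) (- (y ^+ 2)) (1 + x * y) (mob_act x u1 y u2 p0)).2
     * NG cjC (- (y ^+ 2)) (1 + x * y) (mob_act x u1 y u2 p0).1 (mob_act x u1 y u2 p0).2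
     * NG cjC y u2 p0.1 p0.2 = EfG cjC n bh kh (p0.1 + 1) p0.2.
  move=> p0 p00.
  rewrite TR //; last exact: H3_mob.
  rewrite TR //; first last.
  - by apply: tA_real; try cjt; try done.
  - by apply: tA_real; try cjt; try done.
  rewrite comp_A ?comp_B ?comp_C; try cjt; try done.
  have e1 : (1 - x * y) * x + x ^+ 2 * y = x * 1 + u1 * 0 by ring.
  have e2 : (1 - x * y) * u1 + x ^+ 2 * u2 = x * 1 + u1 * 1.
    transitivity (u1 + x * (x * u2 - u1 * y)); first by ring.
    by rewrite hu; ring.
  have e3 : - (y ^+ 2) * x + (1 + x * y) * y = y * 1 + u2 * 0 by ring.
  have e4 : - (y ^+ 2) * u1 + (1 + x * y) * u2 = y * 1 + u2 * 1.
    transitivity (u2 + y * (x * u2 - u1 * y)); first by ring.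
    by rewrite hu; ring.
  rewrite e1 e2 e3 e4 -comp_A -?comp_B -?comp_C; try cjt; try done.
  by apply: shiftU; try cjt; try done.
have inT : in_SL2O d (1 - x * y) (x ^+ 2) (- (y ^+ 2)) (1 + x * y).
  split => //.
  - by apply: inO_add; [exact: inO_1 | apply: inO_opp; exact: inO_mul].
  - by rewrite expr2; exact: inO_mul.
  - by apply: inO_opp; rewrite expr2; exact: inO_mul.
  - by apply: inO_add; [exact: inO_1 | exact: inO_mul].
have cen : forall s t, EfG cjC n bh kh (- cjC bh / n + s) t = n * (s * cjC s + t ^+ 2) - D / n.
  by move=> s t; rewrite center -?Dh //; try cjt.
have zero_of : forall (u v : C), 0 < v -> u * v = 0 -> u = 0.
  by move=> u v v0 /eqP; rewrite mulf_eq0 (gt_eqF v0) orbF => /eqP.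
move: (hemb _ _ _ _ inT) => /= [Heq|Hdis].
- pose p0 : C * C := (- cjC bh / n + 0, r).
  have p00 : 0 < p0.2 := r0.
  pose P := mob_act x u1 y u2 p0.
  have planeP : plane a B c P.
    apply/plane_iff; split; first exact: H3_mob.
    apply: (zero_of _ _ (hN p0 p00)); rewrite E1 // cen sqrtCK cjC0 mul0r add0r.
    by field.
  have : plane a B c (mob_act (1 - x * y) (x ^+ 2) (- (y ^+ 2)) (1 + x * y) P).
    by apply/(Heq _).1; exists P.
  move/plane_iff => [_ hq0].
  have := E2 p0 p00; rewrite -/P hq0 !mul0r /= -addrA cen add0r cjC1 mul1r sqrtCK.
  have -> : n * (1 + D / n ^+ 2) - D / n = n by field.
  by move=> /esym /eqP; rewrite (negbTE n0).
- pose p0 : C * C := (- cjC bh / n + - 2^-1, t1).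
  have p00 : 0 < p0.2 := t10.
  pose P := mob_act x u1 y u2 p0.
  have planeP : plane a B c P.
    apply/plane_iff; split; first exact: H3_mob.
    apply: (zero_of _ _ (hN p0 p00)); rewrite E1 // cen sqrtCK cjCN cjCV cjCn /w.
    by field.
  exfalso; apply: (Hdis (mob_act (1 - x * y) (x ^+ 2) (- (y ^+ 2)) (1 + x * y) P)); split.
    by exists P.
  apply/plane_iff; split; first by apply: H3_mob => //; exact: H3_mob.
  have hP : 0 < P.2 by exact: H3_mob.
  apply: (zero_of _ (NG cjC (- (y ^+ 2)) (1 + x * y) P.1 P.2) (NG_pos _ _ _ _ _ _ hP hT)).
  apply: (zero_of _ _ (hN p0 p00)).
  rewrite /P E2 // /= -addrA cen sqrtCK cjCD cjCN cjCV cjCn cjC1 /w.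
  by field.
Qed.
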